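(* Let $k\ge2$, let $\mathcal{F}\subset 2^{[n]}$ be weakly $k$-cross-free, and let $\mathcal{C}_1,\dots,\mathcal{C}_k$ be nonempty chains with $\mathcal{C}_l\subset\mathcal{F}_{j_l}$ for integers $j_1<\dots<j_k$. For each $l$ fix a set $Y(\mathcal{C}_l)$ as described in the context. Then there do not exist $k$ distinct elements $y_1,\dots,y_k\in[n]$ such that $(\mathcal{C}_1,\dots,\mathcal{C}_k)$ is good for each of $y_1,\dots,y_k$.
   Context: Sets $A,B$ are weakly crossing if $A\setminus B$, $B\setminus A$, $A\cap B$ are all non-empty; a family is weakly $k$-cross-free if it contains no $k$ pairwise weakly crossing sets. $\mathcal{F}_i=\{X\in\mathcal{F}:2^i<|X|\le 2^{i+1}\}$. A chain is written $\mathcal{C}(1)\subsetneq\dots\subsetneq\mathcal{C}(l)$. $Y(\mathcal{C})$ is a set obtained by choosing one element of $\mathcal{C}(1)$ and one element of each difference $\mathcal{C}(j+1)\setminus\mathcal{C}(j)$, $j=1,\dots,l-1$. The $k$-tuple $(\mathcal{C}_1,\dots,\mathcal{C}_k)$ is good for $y$ if (i) $y\in Y(\mathcal{C}_l)$ for every $l\in[k]$ and (ii) letting $C_l$ be the smallest set in $\mathcal{C}_l$ containing $y$, we have $C_1\subset C_2\subset\dots\subset C_k$. *)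

(* Defs.v *)
From HB Require Import structures.
From mathcomp Require Import all_boot all_order all_algebra.
Set Implicit Arguments. Unset Strict Implicit. Unset Printing Implicit Defensive.
Import Order.TTheory GRing.Theory Num.Theory.

Definition wcross (n : nat) (A B : {set 'I_n}) : bool :=
  [&& A :\: B != set0, B :\: A != set0 & A :&: B != set0].

Definition weakly_k_cross_free (n k : nat) (F : {set {set 'I_n}}) : Prop :=
  forall S : {set {set 'I_n}}, S \subset F -> #|S| = k ->
    ~ (forall A B, A \in S -> B \in S -> A != B -> wcross A B).

Definition Flevel (n : nat) (F : {set {set 'I_n}}) (i : int) : {set {set 'I_n}} :=
  [set X in F | ((2%:Q ^ i < (#|X|)%:R) && ((#|X|)%:R <= 2%:Q ^ (i + 1)))%R].

(* A (nonempty) chain C(1) ⊊ ... ⊊ C(l) is a nonempty seq, strictly increasing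
   for proper inclusion; C(j+1) is nth set0 C j. *)
Definition is_chain (n : nat) (C : seq {set 'I_n}) : bool :=
  (C != [::]) && sorted (fun A B : {set 'I_n} => A \proper B) C.

(* Y is a valid choice of Y(C): one element of C(1) and one element of each
   difference C(j+1) \ C(j). *)
Definition isY (n : nat) (C : seq {set 'I_n}) (Y : {set 'I_n}) : Prop :=
  exists f : nat -> 'I_n,
    (forall i, i < size C ->
       f i \in nth set0 C i :\: (if i is i'.+1 then nth set0 C i' else set0))
    /\ Y = [set f (val i) | i : 'I_(size C)].

Definition smallest_in (n : nat) (C : seq {set 'I_n}) (y : 'I_n) : {set 'I_n} :=
  nth set0 C (find (fun X : {set 'I_n} => y \in X) C).

Definition good_for (n k : nat) (C : 'I_k -> seq {set 'I_n})
    (Y : 'I_k -> {set 'I_n}) (y : 'I_n) : Prop :=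
  (forall l, y \in Y l) /\
  (forall l l' : 'I_k, l <= l' -> smallest_in (C l) y \subset smallest_in (C l') y).

(* Main.v *)
Require Import Defs.
From HB Require Import structures.
From mathcomp Require Import all_boot all_order all_algebra.
Import Order.TTheory GRing.Theory Num.Theory.
Set Implicit Arguments. Unset Strict Implicit.

Lemma proper_transitive n : transitive (fun A B : {set 'I_n} => A \proper B).
Proof. move=> B A C; exact: proper_trans. Qed.

Lemma chain_sub n (C : seq {set 'I_n}) :
  sorted (fun A B : {set 'I_n} => A \proper B) C ->
  forall i i', i <= i' -> i' < size C -> nth set0 C i \subset nth set0 C i'.
Proof.
move=> hs i i'; rewrite leq_eqVlt => /orP[/eqP -> _| lt hi']; first exact: subxx.
apply: proper_sub.
apply: (sorted_ltn_nth (@proper_transitive n) set0 hs) => //; rewrite inE //.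
exact: ltn_trans lt hi'.
Qed.

Lemma find_le n (C : seq {set 'I_n}) y i :
  y \in nth set0 C i -> find (fun X : {set 'I_n} => y \in X) C <= i.
Proof.
move=> hy; rewrite leqNgt; apply/negP => /(before_find set0).
by rewrite hy.
Qed.

Lemma Y_find n (C : seq {set 'I_n}) (f : nat -> 'I_n) :
  sorted (fun A B : {set 'I_n} => A \proper B) C ->
  (forall i, i < size C ->
       f i \in nth set0 C i :\: (if i is i'.+1 then nth set0 C i' else set0)) ->
  forall i, i < size C -> find (fun X : {set 'I_n} => f i \in X) C = i.
Proof.
move=> hs hf i hi; have /setDP [h1 h2] := hf i hi.
apply/eqP; rewrite eqn_leq find_le //= leqNgt; apply/negP => lt.
case: i hi h1 h2 lt => // i hi h1 h2 lt.
have hh : has (fun X : {set 'I_n} => f i.+1 \in X) C.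
  by rewrite has_find; exact: ltn_trans lt hi.
have hin := nth_find set0 hh.
have := subsetP (@chain_sub _ _ hs _ i lt (ltnW hi)) _ hin.
by move/negP: h2.
Qed.

Lemma Y_props n (C : seq {set 'I_n}) Y :
  sorted (fun A B : {set 'I_n} => A \proper B) C -> isY C Y ->
  (forall y, y \in Y -> find (fun X : {set 'I_n} => y \in X) C < size C) /\
  {in Y &, forall y y', find (fun X : {set 'I_n} => y \in X) C =
        find (fun X : {set 'I_n} => y' \in X) C -> y = y'}.
Proof.
move=> hs [f [hf ->]]; split.
  by move=> y /imsetP [i _ ->]; rewrite (Y_find hs hf (ltn_ord i)).
by move=> y y' /imsetP[i _ ->] /imsetP[i' _ ->]; rewrite (Y_find hs hf (ltn_ord i)) (Y_find hs hf (ltn_ord i')) => /val_inj ->.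
Qed.

Lemma level_card n (F : {set {set 'I_n}}) (i i' : int) X X' : (i < i')%R ->
  X \in Flevel F i -> X' \in Flevel F i' -> #|X| < #|X'|.
Proof.
move=> lt; rewrite !inE => /andP[_ /andP[_ h1]] /andP[_ /andP[h2 _]].
rewrite -(ltr_nat rat); apply: (le_lt_trans h1); apply: le_lt_trans h2.
by rewrite ler_eXz2l ?lezD1 // ltr1n.
Qed.

Theorem claim5 (n k : nat) (hk : 2 <= k) (F : {set {set 'I_n}})
  (hF : weakly_k_cross_free k F)
  (C : 'I_k -> seq {set 'I_n}) (j : 'I_k -> int)
  (hj : forall l l' : 'I_k, l < l' -> (j l < j l')%R)
  (hC : forall l, is_chain (C l))
  (hCF : forall l, all (fun X : {set 'I_n} => X \in Flevel F (j l)) (C l))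
  (Y : 'I_k -> {set 'I_n}) (hY : forall l, isY (C l) (Y l)) :
  ~ (exists ys : 'I_k -> 'I_n, injective ys /\ forall m, good_for C Y (ys m)).
Proof.
move=> [ys [ysI good]].
have k0 : 0 < k by exact: ltnW hk.
pose l0 : 'I_k := Ordinal k0.
have hs l : sorted (fun A B : {set 'I_n} => A \proper B) (C l) by case/andP: (hC l).
pose r (l : 'I_k) (m : 'I_k) := find (fun X : {set 'I_n} => ys m \in X) (C l).
have rsize l m : r l m < size (C l).
  have [h _] := Y_props (hs l) (hY l); apply: h; exact: (proj1 (good m)).
have rin l m : ys m \in nth set0 (C l) (r l m).
  apply: (@nth_find _ set0 (fun X : {set 'I_n} => ys m \in X)).
  by rewrite has_find; exact: rsize.
have rinj l a b : r l a = r l b -> a = b.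
  move=> e; apply: ysI; have [_ h] := Y_props (hs l) (hY l).
  exact: h (proj1 (good a) l) (proj1 (good b) l) e.
have rle l a m : ys a \in nth set0 (C l) (r l m) -> r l a <= r l m by exact: find_le.
have r0in a b : r l0 b < r l0 a -> forall l, ys b \in nth set0 (C l) (r l a).
  move=> lt l.
  have h0 : ys b \in nth set0 (C l0) (r l0 a) :=
    subsetP (chain_sub (hs l0) (ltnW lt) (rsize l0 a)) _ (rin l0 b).
  exact: subsetP (proj2 (good a) l0 l (leq0n _)) _ h0.
have rnot a b : r l0 b < r l0 a -> forall l, ys a \notin nth set0 (C l) (r l b).
  move=> lt l; apply/negP => h.
  have e : r l a = r l b by apply/eqP; rewrite eqn_leq (rle _ _ _ h) (rle _ _ _ (r0in _ _ lt l)).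
  by move: lt; rewrite (rinj _ _ _ e) ltnn.
pose rc m := #|[set m' | r l0 m < r l0 m']|.
have rcP m : rc m < k.
  rewrite -[k in _ < k]card_ord -cardsT; apply: proper_card; apply/properP; split.
    exact: subsetT.
  by exists m; [exact: in_setT | rewrite inE ltnn].
pose c m : 'I_k := Ordinal (rcP m).
have crlt a b : r l0 a < r l0 b -> c b < c a.
  move=> lt /=; apply: proper_card; apply/properP; split.
    apply/subsetP => x; rewrite !inE => h; exact: ltn_trans lt h.
  by exists b; rewrite inE ?ltnn.
have cr a b : c a < c b -> r l0 b < r l0 a.
  move=> lt; case: (ltngtP (r l0 a) (r l0 b)) => h.
  - by move: (crlt _ _ h); rewrite ltnNge (ltnW lt).
  - by [].
  - by move: lt; rewrite (rinj _ _ _ h) ltnn.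
pose A m := nth set0 (C (c m)) (r (c m) m).
have AC m : A m \in C (c m) by apply: mem_nth; exact: rsize.
have AF m : A m \in Flevel F (j (c m)) by exact: (allP (hCF (c m))) _ (AC m).
have Acard a b : c a < c b -> #|A a| < #|A b|.
  by move=> lt; exact: level_card (hj _ _ lt) (AF a) (AF b).
have cross a b : c a < c b -> wcross (A a) (A b) /\ wcross (A b) (A a).
  move=> lt; have lt0 := cr _ _ lt.
  have h1 : ys a \in A a :\: A b by rewrite inE (rnot _ _ lt0) (rin _ a).
  have h2 : ys b \in A a :&: A b by rewrite inE (r0in _ _ lt0) (rin _ b).
  have h3 : A b :\: A a != set0.
    rewrite setD_eq0; apply/negP => /subset_leq_card; by rewrite leqNgt Acard.
  have h1' : A a :\: A b != set0 by apply/set0Pn; exists (ys a).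
  have h2' : A a :&: A b != set0 by apply/set0Pn; exists (ys b).
  split; rewrite /wcross; apply/and3P; split => //; by rewrite setIC.
have cinj : injective c.
  move=> a b e; case: (ltngtP (r l0 a) (r l0 b)) => h.
  - by move: (crlt _ _ h); rewrite e ltnn.
  - by move: (crlt _ _ h); rewrite e ltnn.
  - exact: rinj h.
have Ainj : injective A.
  move=> a b e; apply: cinj; case: (ltngtP (c a) (c b)) => h.
  - by move: (Acard _ _ h); rewrite e ltnn.
  - by move: (Acard _ _ h); rewrite e ltnn.
  - exact: val_inj h.
apply: (hF [set A m | m : 'I_k]).
- apply/subsetP => X /imsetP[m _ ->]; have := AF m; rewrite inE => /andP[].
  done.
- by rewrite card_imset // card_ord.
- move=> X1 X2 /imsetP[a _ ->] /imsetP[b _ ->] neq.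
  case: (ltngtP (c a) (c b)) => h.
  + exact: (proj1 (cross _ _ h)).
  + exact: (proj2 (cross _ _ h)).
  + by move: neq; rewrite (cinj a b (val_inj h)) eqxx.
Qed.
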